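(* Let $F$ be a $\theta\mathrm{DMBPP}(\lambda,\Psi_\eta,\mathcal{V},\Psi_\theta)$, defined such that $\mathcal{V}$ is a set of equicontinuous functions and such that for every $j\ge1$ the stochastic process $\eta_j$ is a.s. continuous. Then for every sequence $\{x_l\}_{l\ge0}\subseteq\mathcal{X}$ with $\lim_{l\to\infty}x_l=x_0$, $$\lim_{l\to\infty}\sup_{B\in\mathcal{B}(\Delta_m)}|F_{x_l}(B)-F_{x_0}(B)|=0\quad\text{a.s.},$$ i.e., $F_{x_l}$ converges a.s. in total variation norm to $F_{x_0}$.
   Context: Let $m,p\ge 1$. $\Delta_m=\{y\in[0,1]^m:\sum_{i=1}^m y_i\le 1\}$, $\Delta_m^0=\{y\in\Delta_m: y_i>0\ \forall i\}$, $\mathcal{B}(\Delta_m)$ its Borel sets. $\mathrm{dir}(y\mid\alpha)$, $\alpha=(\alpha_1,\dots,\alpha_{m+1})$, is the Dirichlet density $\frac{\Gamma(\sum_i\alpha_i)}{\prod_i\Gamma(\alpha_i)}\prod_{i=1}^m y_i^{\alpha_i-1}(1-\sum_i y_i)^{\alpha_{m+1}-1}$. For $k\in\mathbb{N}$, $\alpha(k,\mathbf{j})=(j_1,\dots,j_m,k+m-\|\mathbf{j}\|_1)$, $\lceil k\theta\rceil=(\lceil k\theta_1\rceil,\dots,\lceil k\theta_m\rceil)$. $\mathcal{X}\subseteq\mathbb{R}^p$. $\mathcal{V}=\{v_x:x\in\mathcal{X}\}$: known continuous functions (described as bijective) $v_x:\mathbb{R}\to[0,1]$ with $x\mapsto v_x(a)$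 continuous for every $a$; ''$\mathcal{V}$ is a set of equicontinuous functions'' means $\{x\mapsto v_x(a):a\in\mathbb{R}\}$ is equicontinuous. $\theta\mathrm{DMBPP}(\lambda,\Psi_\eta,\mathcal{V},\Psi_\theta)$: $\eta_j$, $j\ge1$, i.i.d. real-valued stochastic processes on $\mathcal{X}$ (law indexed by finite-dimensional $\Psi_\eta$); $\theta_j$, $j\ge1$, i.i.d. $\Delta_m^0$-valued random vectors (law indexed by $\Psi_\theta$); $k\in\mathbb{N}$ random (law indexed by $\lambda$); $F_x$ is the probability measure on $\Delta_m$ with Lebesgue density $f_x(\cdot)=\sum_{j\ge1}w_j(x)\mathrm{dir}(\cdot\mid\alpha(k,\lceil k\theta_j\rceil))$, $w_j(x)=V_j(x)\prod_{l<j}(1-V_l(x))$, $V_j(x)=v_x(\eta_j(x))$. The weights sum to one a.s. *)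

(* Defs.v *)
From HB Require Import structures.
From mathcomp Require Import all_boot all_order all_algebra.
From mathcomp Require Import all_classical all_reals all_analysis.

Set Implicit Arguments.
Unset Strict Implicit.
Unset Printing Implicit Defensive.

Import Order.TTheory GRing.Theory Num.Theory.
Import numFieldNormedType.Exports.

Local Open Scope classical_set_scope.
Local Open Scope ring_scope.

Section Defs.
Variable R : realType.

(** * Lebesgue measure on R^m, R^m represented by [m.-tuple R]
    (whose canonical sigma-algebra in MathComp-Analysis is the product
    of the Borel sigma-algebras, i.e. the Borel sets of R^m). *)
Fixpoint lebesgue_tuple (n : nat) : set (n.-tuple R) -> \bar R :=
  match n return set (n.-tuple R) -> \bar R with
  | 0 => fun A => ((\1_A : _ -> R) [tuple])%:E
  | n'.+1 => fun A =>
      (\int[@lebesgue_measure R]_x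
         lebesgue_tuple [set t : n'.-tuple R | A (cons_tuple x t)])%E
  end.

Definition simplex (m : nat) : set (m.-tuple R) :=
  [set y | (forall i, 0 <= tnth y i <= 1) /\ \sum_(i < m) tnth y i <= 1].

Definition simplex0 (m : nat) : set (m.-tuple R) :=
  [set y | simplex y /\ forall i, 0 < tnth y i].

(** * Dirichlet density dir(y | alpha) with alpha = (a_1,..,a_m, a_{m+1})
    positive integers; Gamma(n) = (n-1)! for positive integers n. *)
Definition dir (m : nat) (a : 'I_m -> nat) (alast : nat) (y : m.-tuple R) : R :=
  (((\sum_(i < m) a i) + alast).-1`!%:R
     / ((\prod_(i < m) (a i).-1`!)%:R * (alast.-1`!)%:R))
  * (\prod_(i < m) tnth y i ^+ (a i).-1)
  * (1 - \sum_(i < m) tnth y i) ^+ alast.-1.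

(** ceiling of k * theta_i, a positive integer when k >= 1, theta_i > 0 *)
Definition ceil_k (m k : nat) (theta : m.-tuple R) (i : 'I_m) : nat :=
  `|Num.ceil (k%:R * tnth theta i)|%N.

Definition dir_k (m k : nat) (theta : m.-tuple R) (y : m.-tuple R) : R :=
  dir (ceil_k k theta) (k + m - \sum_(i < m) ceil_k k theta i)%N y.

Definition stickV (p : nat) (v : 'rV[R]_p -> R -> R) (eta : 'rV[R]_p -> R)
  (x : 'rV[R]_p) : R := v x (eta x).

Definition weight (p : nat) (v : 'rV[R]_p -> R -> R)
  (eta : nat -> 'rV[R]_p -> R) (x : 'rV[R]_p) (j : nat) : R :=
  stickV v (eta j) x * \prod_(l < j) (1 - stickV v (eta l) x).

(** * Density f_x and measure F_x, for one realization *)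
Definition dmbpp_density (m p : nat) (v : 'rV[R]_p -> R -> R)
  (eta : nat -> 'rV[R]_p -> R) (theta : nat -> m.-tuple R) (k : nat)
  (x : 'rV[R]_p) (y : m.-tuple R) : \bar R :=
  (\sum_(j <oo) (weight v eta x j * dir_k k (theta j) y)%:E)%E.

Definition dmbpp_measure (m p : nat) (v : 'rV[R]_p -> R -> R)
  (eta : nat -> 'rV[R]_p -> R) (theta : nat -> m.-tuple R) (k : nat)
  (x : 'rV[R]_p) (B : set (m.-tuple R)) : \bar R :=
  (\int[@lebesgue_tuple m]_(y in B) dmbpp_density v eta theta k x y)%E.

Definition tv_dist (m : nat) (F G : set (m.-tuple R) -> \bar R) : \bar R :=
  ereal_sup [set `|(F B - G B)%E|%E | B in
               [set B : set (m.-tuple R) | measurable B /\ B `<=` @simplex m]].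

Definition mutually_independent d (Omega : measurableType d)
  (P : probability Omega R) (G : nat -> set (set Omega)) : Prop :=
  forall (J : seq nat), uniq J -> forall A : nat -> set Omega,
    (forall i, i \in J -> G i (A i)) ->
    P (\bigcap_(i in [set i | i \in J]) A i) =
      (\prod_(i <- J) fine (P (A i)))%:E.

Definition process_sigma d (Omega : measurableType d) (p : nat)
  (X : set 'rV[R]_p) (eta : Omega -> 'rV[R]_p -> R) : set (set Omega) :=
  <<s [set A | exists x B, X x /\ measurable B /\
               A = (fun w => eta w x) @^-1` B] >>.

Definition iid_processes d (Omega : measurableType d) (P : probability Omega R)
  (p : nat) (X : set 'rV[R]_p) (eta : nat -> Omega -> 'rV[R]_p -> R) : Prop :=
  mutually_independent P (fun j => process_sigma X (eta j)) /\
  forall j (n : nat) (xs : n.-tuple 'rV[R]_p) (B : set (n.-tuple R)),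
    (forall i, X (tnth xs i)) -> measurable B ->
    P [set w | B (map_tuple (eta j w) xs)] =
    P [set w | B (map_tuple (eta 0%N w) xs)].

Definition iid_vectors d (Omega : measurableType d) (P : probability Omega R)
  (m : nat) (theta : nat -> Omega -> m.-tuple R) : Prop :=
  (forall j, measurable_fun setT (theta j)) /\
  mutually_independent P
    (fun j => [set theta j @^-1` B | B in [set B | measurable B]]) /\
  forall j (B : set (m.-tuple R)), measurable B ->
    P (theta j @^-1` B) = P (theta 0%N @^-1` B).

End Defs.

(* Main.v *)
Require Import Defs.
From HB Require Import structures.
From mathcomp Require Import all_boot all_order all_algebra.
From mathcomp Require Import all_classical all_reals all_analysis.
From mathcomp Require Import ring lra.
Set Implicit Arguments.
Unset Strict Implicit.
Unset Printing Implicit Defensive.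
Import Order.TTheory GRing.Theory Num.Theory.
Import numFieldNormedType.Exports.
Local Open Scope classical_set_scope.
Local Open Scope ring_scope.

Section ConsMeasure.
Local Open Scope ereal_scope.
Variables (R : realType) (n : nat)
  (m2 : {sigma_finite_measure set (n.-tuple R) -> \bar R}).
Definition consf (p : R * n.-tuple R) : n.+1.-tuple R := cons_tuple p.1 p.2.
Lemma measurable_consf : measurable_fun setT consf.
Proof. exact: measurable_cons. Qed.
Definition consm (A : set (n.+1.-tuple R)) : \bar R :=
  (@lebesgue_measure R \x m2) (consf @^-1` A).
Let c0 : consm set0 = 0.
Proof. by rewrite /consm preimage_set0 measure0. Qed.
Let cge0 A : 0 <= consm A.
Proof. exact: measure_ge0. Qed.
Let csig : semi_sigma_additive consm.
Proof.
move=> F mF tF mUF; rewrite /consm preimage_bigcup.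
apply: measure_semi_sigma_additive.
- by move=> k; rewrite -[X in measurable X]setTI; exact: measurable_consf.
- apply/trivIsetP => /= i j _ _ ij; rewrite -preimage_setI.
  by move/trivIsetP : tF => /(_ _ _ _ _ ij) ->//; rewrite preimage_set0.
- by rewrite -preimage_bigcup -[X in measurable X]setTI; exact: measurable_consf.
Qed.
HB.instance Definition _ := isMeasure.Build _ _ _ consm c0 cge0 csig.
Let csf : sigma_finite setT consm.
Proof.
have [F TF mF] : sigma_finite setT (@lebesgue_measure R \x m2).
  have /sigma_finiteP[F [TF ndF Foo]] := sigma_finiteT (@lebesgue_measure R).
  have /sigma_finiteP[G [TG ndG Goo]] := sigma_finiteT m2.
  exists (fun n => F n `*` G n).
   rewrite -setXTT TF TG predeqE => -[x y]; split.
      move=> [/= [n0 _ Fnx] [k _ Gky]]; exists (maxn n0 k) => //; split.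
      - by move: x Fnx; exact/subsetPset/ndF/leq_maxl.
      - by move: y Gky; exact/subsetPset/ndG/leq_maxr.
    by move=> [n0 _ []/= ? ?]; split; exists n0.
  move=> k; have [? ?] := Foo k; have [? ?] := Goo k.
  split; first exact: measurableX.
  by rewrite product_measure1E// lte_mul_pinfty// ge0_fin_numE.
pose g (t : n.+1.-tuple R) : R * n.-tuple R := (thead t, [tuple of behead t]).
have mg : measurable_fun setT g.
  apply/measurable_fun_pairP; split.
    exact: measurable_tnth.
  exact: measurable_behead.
have gf p : g (consf p) = p.
  case: p => x t; rewrite /g /consf /=; congr pair; exact: val_inj.
have fg t : consf (g t) = t.
  by rewrite /g /consf; apply: val_inj => /=; case: t => -[|a s]//= _.
exists (fun k => g @^-1` F k).
  rewrite -(preimage_setT g) TF preimage_bigcup //.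
move=> k; split.
  by rewrite -[X in measurable X]setTI; apply: mg; case: (mF k).
rewrite /consm (_ : consf @^-1` (g @^-1` F k) = F k); first by case: (mF k).
by apply/seteqP; split => p /=; rewrite gf.
Qed.
HB.instance Definition _ := Measure_isSigmaFinite.Build _ _ _ consm csf.
End ConsMeasure.

Section TM.
Local Open Scope ereal_scope.
Variable R : realType.
Fixpoint tm (n : nat) : {sigma_finite_measure set (n.-tuple R) -> \bar R} :=
  match n return {sigma_finite_measure set (n.-tuple R) -> \bar R} with
  | 0 => \d_([tuple] : 0.-tuple R)
  | n'.+1 => consm (tm n')
  end.

Lemma tmE n A : tm n A = @lebesgue_tuple R n A.
Proof.
elim: n A => [|n IH] A //=.
rewrite /consm /product_measure1; apply: eq_integral => x _ /=.
rewrite IH; congr (@lebesgue_tuple R n _); apply/seteqP; split => t /=;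
  by rewrite /xsection /= in_setE.
Qed.

Definition sball n (r : R) : set (n.-tuple R) :=
  [set t | (\sum_(i < n) `|tnth t i| <= r)%R].
Arguments sball : clear implicits.

Lemma measurable_sball n r : measurable (sball n r).
Proof.
rewrite /sball -[X in measurable X]setTI.
have : measurable_fun setT (fun t : n.-tuple R => \sum_(i < n) `|tnth t i|)%R.
  apply: measurable_sum => i.
  apply: measurableT_comp => //; exact: measurable_tnth.
move=> /(_ measurableT [set` `]-oo, r]]%R (measurable_itv _)).
congr measurable; apply/seteqP; split => t /=; rewrite in_itv //=.
Qed.

Lemma tm_sball n r : tm n (sball n r) < +oo.
Proof.
elim: n r => [|n IH] r /=.
  by rewrite /dirac ltry.
rewrite /consm.
have sub : @consf R n @^-1` sball n.+1 r `<=` (`[(- r)%R, r]%classic `*` sball n r).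
  move=> [x t] /=; rewrite /sball /consf /= big_ord_recl /=.
  have E i : tnth (cons_tuple x t) (lift ord0 i) = tnth t i.
    by rewrite !(tnth_nth 0%R).
  have E0 : tnth (cons_tuple x t) ord0 = x by rewrite (tnth_nth 0%R).
  under eq_bigr do rewrite E.
  rewrite E0 => H.
  have h0 : (0 <= \sum_(i < n) `|tnth t i|)%R by apply: sumr_ge0.
  split; last by rewrite (le_trans _ H) // lerDr.
  rewrite in_itv /= -ler_norml (le_trans _ H) // lerDl //.
apply: (@le_lt_trans _ _ ((@lebesgue_measure R \x tm n) (`[(- r)%R, r]%classic `*` sball n r))).
  apply: (@le_measure _ _ _ (@lebesgue_measure R \x tm n)%E _ _ _ _ sub); rewrite ?inE.
  - rewrite -[X in measurable X]setTI; apply: measurable_consf => //.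
    exact: measurable_sball.
  - apply: measurableX => //; exact: measurable_sball.
rewrite product_measure1E //; last exact: measurable_sball.
rewrite lte_mul_pinfty //.
  by rewrite ge0_fin_numE // compact_finite_measure //; exact: segment_compact.
Qed.
End TM.

Section Scheffe.
Variable R : realType.

Lemma cvg_fsum (N : nat) (f : nat -> nat -> R) (g : nat -> R) :
  (forall j, (fun l => f l j) @ \oo --> g j) ->
  (fun l => \sum_(j < N) f l j) @ \oo --> \sum_(j < N) g j.
Proof.
move=> H; elim: N => [|N IH].
  under eq_fun do rewrite big_ord0. rewrite big_ord0; exact: cvg_cst.
under eq_fun do rewrite big_ord_recr /=. rewrite big_ord_recr /=.
exact: cvgD.
Qed.

Lemma psum_split (f : nat -> R) (N n : nat) : (N <= n)%N ->
  \sum_(j < n) f j = \sum_(j < N) f j + \sum_(N <= j < n) f j.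
Proof. by move=> Nn; rewrite -(big_mkord xpredT f) -(big_mkord xpredT f) (big_cat_nat (leq0n N) Nn). Qed.

Lemma psum_mono (f : nat -> R) (n n' : nat) : (forall j, 0 <= f j) ->
  (n <= n')%N -> \sum_(j < n) f j <= \sum_(j < n') f j.
Proof.
move=> f0 nn'; rewrite (psum_split f nn') lerDl; exact: sumr_ge0.
Qed.

Lemma psum_le1 (f : nat -> R) : (forall j, 0 <= f j) ->
  (fun n => \sum_(j < n) f j) @ \oo --> (1:R) -> forall n, \sum_(j < n) f j <= 1.
Proof.
move=> f0 H n.
have nd : {homo (fun n => \sum_(j < n) f j) : n m / (n <= m)%N >-> n <= m}.
  by move=> a b ab; exact: psum_mono.
have := nondecreasing_cvgn_le nd (cvgP _ H) n.
by rewrite (cvg_lim _ H).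
Qed.

Lemma scheffe (a : nat -> nat -> R) (b : nat -> R) :
  (forall l j, 0 <= a l j) -> (forall j, 0 <= b j) ->
  (forall l, (fun n => \sum_(j < n) a l j) @ \oo --> (1:R)) ->
  ((fun n => \sum_(j < n) b j) @ \oo --> (1:R)) ->
  (forall j, (fun l => a l j) @ \oo --> b j) ->
  forall e, 0 < e -> \forall l \near \oo, forall n, \sum_(j < n) `|a l j - b j| <= e.
Proof.
move=> a0 b0 ha hb hab e e0.
have e4 : 0 < e / 4 by rewrite divr_gt0.
have [N _ HN] := (cvgrPdist_lt _ _).1 hb _ e4.
have HN' := HN N (leqnn N); rewrite /= in HN'.
have hc : (fun l => \sum_(j < N) `|a l j - b j|) @ \oo --> 0.
  have E : \sum_(j < N) `|b j - b j| = 0 :> R.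
    by rewrite big1 // => j _; rewrite subrr normr0.
  have := @cvg_fsum N (fun l j => `|a l j - b j|) (fun j => `|b j - b j|).
  rewrite E; apply => j.
  apply: cvg_norm; apply: cvgB => //; exact: cvg_cst.
have [L _ HL] := (cvgr0Pnorm_le _).1 hc _ e4.
near=> l.
have Hl : \sum_(j < N) `|a l j - b j| <= e / 4.
  have := HL l; rewrite /= ger0_norm; last exact: sumr_ge0.
  apply; near: l; exists L => //.
have Sa1 := psum_le1 (a0 l) (ha l).
have Sb1 := psum_le1 b0 hb.
have hbN : 1 - e / 4 <= \sum_(j < N) b j.
  move: HN'; rewrite ltr_norml; lra.
have hdiff : \sum_(j < N) b j - \sum_(j < N) a l j <= \sum_(j < N) `|a l j - b j|.
  rewrite -sumrB; apply: ler_sum => j _; rewrite distrC; exact: ler_norm.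
move=> n.
suff H : forall n, (N <= n)%N -> \sum_(j < n) `|a l j - b j| <= e.
  apply: le_trans (H (maxn n N) (leq_maxr _ _)).
  by apply: (@psum_mono (fun j => `|a l j - b j|)); [move=> j; exact: normr_ge0 | exact: leq_maxl].
move=> n' Nn'.
rewrite (psum_split (fun j => `|a l j - b j|) Nn').
have ta : \sum_(N <= j < n') a l j = \sum_(j < n') a l j - \sum_(j < N) a l j.
  by rewrite (psum_split (a l) Nn') addrC addKr.
have tb : \sum_(N <= j < n') b j = \sum_(j < n') b j - \sum_(j < N) b j.
  by rewrite (psum_split b Nn') addrC addKr.
have : \sum_(N <= j < n') `|a l j - b j| <= \sum_(N <= j < n') a l j + \sum_(N <= j < n') b j.
  rewrite -big_split; apply: ler_sum => j _.
  apply: (le_trans (ler_normB _ _)).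
  by rewrite !ger0_norm.
have := Sa1 n'; have := Sb1 n'.
rewrite ta tb; lra.
Unshelve. all: by end_near.
Qed.
End Scheffe.

Section Series.
Variable R : realType.
Local Notation PS a D := (fun n => \sum_(j < n) a j * D j).

Lemma series_cvg (a D : nat -> R) (C : R) :
  (forall j, 0 <= a j) -> (forall n, \sum_(j < n) a j <= 1) ->
  (forall j, 0 <= D j <= C) ->
  cvgn (PS a D) /\ (forall n, 0 <= PS a D n <= C).
Proof.
move=> a0 a1 DC.
have C0 : 0 <= C by case/andP: (DC 0%N) => h1 h2; exact: le_trans h2.
have bnd n : 0 <= PS a D n <= C.
  apply/andP; split.
    apply: sumr_ge0 => j _; apply: mulr_ge0 => //; by case/andP: (DC j).
  apply: (@le_trans _ _ (\sum_(j < n) a j * C)).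
    apply: ler_sum => j _; apply: ler_wpM2l => //; by case/andP: (DC j).
  by rewrite -mulr_suml ler_piMl.
split => //; apply: nondecreasing_is_cvgn.
  move=> p q pq /=; rewrite (psum_split (fun j => a j * D j) pq) lerDl; apply: sumr_ge0 => j _.
  apply: mulr_ge0 => //; by case/andP: (DC j).
by exists C => _ [n _ <-]; case/andP: (bnd n).
Qed.

Lemma series_EFin (a D : nat -> R) : cvgn (PS a D) ->
  (\sum_(j <oo) (a j * D j)%:E)%E = (limn (PS a D))%:E.
Proof.
move=> H; rewrite -EFin_lim //.
rewrite (_ : (fun n => \sum_(0 <= j < n) (a j * D j)%:E) = EFin \o PS a D)%E //.
by apply: funext => n /=; rewrite sumEFin big_mkord.
Qed.

Lemma series_diff (a b D : nat -> R) (C e : R) :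
  (forall j, 0 <= a j) -> (forall n, \sum_(j < n) a j <= 1) ->
  (forall j, 0 <= b j) -> (forall n, \sum_(j < n) b j <= 1) ->
  (forall j, 0 <= D j <= C) ->
  (forall n, \sum_(j < n) `|a j - b j| <= e) ->
  `|limn (PS a D) - limn (PS b D)| <= C * e.
Proof.
move=> a0 a1 b0 b1 DC He.
have [ca _] := series_cvg a0 a1 DC.
have [cb _] := series_cvg b0 b1 DC.
have H : (fun n => `|PS a D n - PS b D n|) @ \oo --> `|limn (PS a D) - limn (PS b D)|.
  by apply: cvg_norm; apply: cvgB.
rewrite -(cvg_lim _ H) //; apply: limr_le; first exact: cvgP H.
near=> n => /=.
rewrite -sumrB.
apply: (le_trans (ler_norm_sum _ _ _)).
apply: (@le_trans _ _ (\sum_(j < n) `|a j - b j| * C)).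
  apply: ler_sum => j _; rewrite -mulrBl normrM.
  case/andP: (DC j) => D0 DC'; rewrite (ger0_norm D0).
  by apply: ler_wpM2l.
by rewrite -mulr_suml mulrC; apply: ler_wpM2l => //; case/andP: (DC 0%N) => h1 h2; exact: le_trans h2.
Unshelve. all: by end_near.
Qed.
End Series.

Section Dir.
Variable R : realType.
Variable m : nat.

Lemma ceil_sum (K : nat) (th : m.-tuple R) :
  (forall i, 0 < tnth th i) -> \sum_(i < m) tnth th i <= 1 ->
  (\sum_(i < m) ceil_k K th i <= K + m)%N.
Proof.
move=> th0 th1.
rewrite -(ler_nat R) natr_sum natrD.
have E i : (ceil_k K th i)%:R = (Num.ceil (K%:R * tnth th i))%:~R :> R.
  rewrite /ceil_k natr_absz ger0_norm // ceil_ge0.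
  apply: (@lt_le_trans _ _ 0) => //; apply: mulr_ge0 => //; exact: ltW.
have H i : (ceil_k K th i)%:R <= K%:R * tnth th i + 1 :> R.
  rewrite E; apply: ltW; rewrite -ltrBlDr.
  by have := ceilB1_lt (K%:R * tnth th i); rewrite intrB.
apply: (le_trans (ler_sum _ (fun i _ => H i))).
rewrite big_split /= -mulr_sumr sumr_const card_ord.
by rewrite lerD2r -[leRHS]mulr1 ler_wpM2l.
Qed.

Lemma dir_bound (K : nat) (th y : m.-tuple R) :
  (forall i, 0 < tnth th i) -> \sum_(i < m) tnth th i <= 1 ->
  simplex y -> 0 <= dir_k K th y <= ((K + m).-1)`!%:R.
Proof.
move=> th0 th1 [y01 y1].
have ys0 : 0 <= \sum_(i < m) tnth y i.
  by apply: sumr_ge0 => i _; case/andP: (y01 i).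
have hN : (\sum_(i < m) ceil_k K th i + (K + m - \sum_(i < m) ceil_k K th i) = K + m)%N.
  by rewrite subnKC // ceil_sum.
rewrite /dir_k /dir hN.
set c := (_ / _).
set P := \prod_(i < m) _.
set Q := (_ ^+ _).
have P01 : 0 <= P <= 1.
  apply/andP; split; first by apply: prodr_ge0 => i _; apply: exprn_ge0; case/andP: (y01 i).
  apply: prodr_ile1 => i _; case/andP: (y01 i) => a b; apply/andP; split.
    exact: exprn_ge0.
  exact: exprn_ile1.
have Q01 : 0 <= Q <= 1.
  apply/andP; split; first by apply: exprn_ge0; rewrite subr_ge0.
  apply: exprn_ile1; first by rewrite subr_ge0.
  by rewrite lerBlDr lerDl.
have den1 : 1 <= ((\prod_(i < m) (ceil_k K th i).-1`!)%:R * ((K + m - \sum_(i < m) ceil_k K th i).-1`!)%:R :> R).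
  rewrite -natrM (ler_nat R 1); rewrite muln_gt0 fact_gt0 andbT.
  by rewrite prodn_gt0 // => i; exact: fact_gt0.
have c01 : 0 <= c <= ((K + m).-1)`!%:R.
  apply/andP; split; first by apply: divr_ge0.
  rewrite /c ler_pdivrMr; last exact: (lt_le_trans ltr01 den1).
  by rewrite ler_peMr.
case/andP: P01 => P0 P1; case/andP: Q01 => Q0 Q1; case/andP: c01 => c0 c1.
apply/andP; split; first by apply: mulr_ge0 => //; apply: mulr_ge0.
rewrite -mulrA; apply: (le_trans _ c1); apply: ler_piMr => //.
by apply: mulr_ile1.
Qed.
End Dir.

Section DirMeas.
Variable R : realType.
Variable m : nat.
Lemma measurable_dir_k (K : nat) (th : m.-tuple R) :
  measurable_fun setT (dir_k K th).
Proof.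
rewrite /dir_k /dir.
apply: measurable_realfun.measurable_funM; first apply: measurable_realfun.measurable_funM.
- exact: measurable_cst.
- apply: measurable_prod => i _; apply: measurable_realfun.measurable_funX; exact: measurable_tnth.
- apply: measurable_realfun.measurable_funX; apply: measurable_realfun.measurable_funB; first exact: measurable_cst.
  by apply: measurable_sum => i; exact: measurable_tnth.
Qed.
End DirMeas.

Section Weight.
Variable R : realType.
Variable p : nat.

Lemma cvg_fprod (N : nat) (f : nat -> nat -> R) (g : nat -> R) :
  (forall j, (fun l => f l j) @ \oo --> g j) ->
  (fun l => \prod_(j < N) f l j) @ \oo --> \prod_(j < N) g j.
Proof.
move=> H; elim: N => [|N IH].
  under eq_fun do rewrite big_ord0. rewrite big_ord0; exact: cvg_cst.
under eq_fun do rewrite big_ord_recr /=. rewrite big_ord_recr /=.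
exact: cvgM.
Qed.

Lemma stick_cvg (X : set 'rV[R]_p) (v : 'rV[R]_p -> R -> R)
  (e : 'rV[R]_p -> R) (xs : nat -> 'rV[R]_p) (x0 : 'rV[R]_p) :
  (forall x, X x -> continuous (v x)) ->
  equicontinuous [set: R] (fun a => (fun x : subspace X => v x a)) ->
  {within X, continuous e} ->
  (forall l, X (xs l)) -> X x0 -> xs @ \oo --> x0 ->
  (fun l => stickV v e (xs l)) @ \oo --> stickV v e x0.
Proof.
move=> vc veq ec xsX X0 xsc.
have xsc' : (xs : nat -> subspace X) @ \oo --> (x0 : subspace X).
  move=> A HA; have HA' : within X (nbhs x0) A by rewrite nbhs_subspace_in.
  have [N _ HN] := xsc _ HA'; exists N => // n Nn; exact: (HN n Nn (xsX n)).
have ec' : (fun l => e (xs l)) @ \oo --> e x0.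
  exact: (cvg_comp (xs : nat -> subspace X) (from_subspace X e) xsc' (ec x0)).
have vc' : (fun l => v x0 (e (xs l))) @ \oo --> v x0 (e x0).
  exact: (cvg_comp (fun l => e (xs l)) (v x0) ec' (vc x0 X0 (e x0))).
apply/cvgrPdist_lt => eps eps0.
have e2 : 0 < eps / 2 by rewrite divr_gt0.
have := veq x0 _ (entourage_ball _ (PosNum e2)).
move=> /xsc' H1.
have H2 := (cvgrPdist_lt _ _).1 vc' _ e2.
near=> l.
have h1 : `|v x0 (e (xs l)) - v (xs l) (e (xs l))| < eps / 2.
  near: l; have [N _ HN] := H1; exists N => // n Nn.
  exact: (HN n Nn (e (xs n)) I).
have h2 : `|v x0 (e x0) - v x0 (e (xs l))| < eps / 2.
  near: l; exact: H2.
rewrite /stickV.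
have := ler_distD (v x0 (e (xs l))) (v x0 (e x0)) (v (xs l) (e (xs l))).
move: h1 h2; set A := v x0 _; set B := v x0 _; set Cc := v (xs l) _.
move=> h1 h2 h3.
by rewrite (le_lt_trans h3) // (splitr eps) ltrD.
Unshelve. all: by end_near.
Qed.

Lemma weight_cvg (X : set 'rV[R]_p) (v : 'rV[R]_p -> R -> R)
  (e : nat -> 'rV[R]_p -> R) (xs : nat -> 'rV[R]_p) (x0 : 'rV[R]_p) :
  (forall x, X x -> continuous (v x)) ->
  equicontinuous [set: R] (fun a => (fun x : subspace X => v x a)) ->
  (forall j, {within X, continuous (e j)}) ->
  (forall l, X (xs l)) -> X x0 -> xs @ \oo --> x0 ->
  forall j, (fun l => weight v e (xs l) j) @ \oo --> weight v e x0 j.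
Proof.
move=> vc veq ec xsX X0 xsc j; rewrite /weight.
apply: cvgM; first exact: (stick_cvg vc veq (ec j) xsX X0 xsc).
apply: (@cvg_fprod j (fun l i => 1 - stickV v (e i) (xs l))
  (fun i => 1 - stickV v (e i) x0)) => i.
apply: cvgB; first exact: cvg_cst.
exact: (stick_cvg vc veq (ec i) xsX X0 xsc).
Qed.
End Weight.

Unset Implicit Arguments.
Set Strict Implicit.
Set Printing Implicit Defensive.

Theorem theorem6
  (R : realType) (m p : nat) (m_ge1 : (0 < m)%N) (p_ge1 : (0 < p)%N)
  (d : measure_display) (Omega : measurableType d) (P : probability Omega R)
  (X : set 'rV[R]_p)
  (v : 'rV[R]_p -> R -> R)
  (eta : nat -> Omega -> 'rV[R]_p -> R)
  (theta : nat -> Omega -> m.-tuple R)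
  (k : Omega -> nat)
  (* the known functions v_x : R -> [0,1] *)
  (v_range : forall x a, X x -> 0 <= v x a <= 1)
  (v_cont : forall x, X x -> continuous (v x))
  (v_cont_x : forall a, {within X, continuous (fun x => v x a)})
  (* eta_j : i.i.d. real-valued stochastic processes on X *)
  (eta_meas : forall j x, X x -> measurable_fun setT (fun w => eta j w x))
  (eta_iid : iid_processes P X eta)
  (* theta_j : i.i.d. Delta_m^0-valued random vectors *)
  (theta_iid : iid_vectors P theta)
  (theta_val : forall j w, simplex0 (theta j w))
  (* k : random positive integer *)
  (k_meas : measurable_fun setT k)
  (k_pos : forall w, (0 < k w)%N)
  (* the weights sum to one a.s. *)
  (w_sum1 : forall x, X x -> {ae P, forall w,
     (fun n : nat => \sum_(j < n) weight v (eta ^~ w) x j) @ \oo --> (1 : R)})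
  (* V is a set of equicontinuous functions *)
  (V_equicont : equicontinuous [set: R]
     (fun a => (fun x : subspace X => v x a)))
  (* every eta_j is a.s. continuous *)
  (eta_cont : forall j, {ae P, forall w, {within X, continuous (eta j w)}})
  (xs : nat -> 'rV[R]_p)
  (xs_in : forall l, X (xs l))
  (xs_cvg : xs @ \oo --> xs 0%N) :
  {ae P, forall w,
     (fun l => tv_dist
        (dmbpp_measure v (eta ^~ w) (theta ^~ w) (k w) (xs l))
        (dmbpp_measure v (eta ^~ w) (theta ^~ w) (k w) (xs 0%N)))
     @ \oo --> 0%E}.
Proof.
have Hs := ae_foralln (fun l => w_sum1 (xs l) (xs_in l)).
have Hc := ae_foralln eta_cont.
move: Hs Hc; apply: filterS2 => w hs hc.
set a := fun l j => weight v (eta ^~ w) (xs l) j.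
have a0 l j : 0 <= a l j.
  rewrite /a /weight /stickV; apply: mulr_ge0.
    by case/andP: (v_range (xs l) (eta j w (xs l)) (xs_in l)).
  apply: prodr_ge0 => i _; rewrite subr_ge0.
  by case/andP: (v_range (xs l) (eta i w (xs l)) (xs_in l)).
have asum l : (fun n => \sum_(j < n) a l j) @ \oo --> (1:R) := hs l.
have acvg j : (fun l => a l j) @ \oo --> a 0%N j.
  exact: (@weight_cvg R p X v (eta ^~ w) xs (xs 0%N) v_cont V_equicont hc xs_in (xs_in 0%N) xs_cvg j).
have a1 l n : \sum_(j < n) a l j <= 1 := psum_le1 (a0 l) (asum l) n.
have Sch := scheffe a0 (fun j => a0 0%N j) asum (asum 0%N) acvg.
set K := k w.
set C : R := ((K + m).-1)`!%:R.
have C0 : 0 <= C by [].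
set D := fun j (y : m.-tuple R) => dir_k K (theta j w) y.
have DC y j : simplex y -> 0 <= D j y <= C.
  move=> sy; have [[_ ths] thp] := theta_val j w; exact: dir_bound.
set mu := tm R m.
have Emu : (mu : set _ -> \bar R) = @lebesgue_tuple R m.
  by apply: funext => A; exact: tmE.
set S := @sball R m (1:R).
have muS : (mu S < +oo)%E := @tm_sball R m (1:R).
have mS : measurable S := @measurable_sball R m (1:R).
have simS : @simplex R m `<=` S.
  move=> y [y01 y1]; rewrite /S /sball /=; apply: le_trans y1.
  by apply: ler_sum => i _; rewrite ger0_norm //; case/andP: (y01 i).
set g := fun l y => limn (fun n => \sum_(j < n) a l j * D j y).
have gcv l y : simplex y -> (fun n => \sum_(j < n) a l j * D j y) @ \oo --> g l y.
  by move=> sy; have [] := series_cvg (a0 l) (a1 l) (DC y ^~ sy).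
have gb l y : simplex y -> `|g l y| <= C.
  move=> sy; have [cv bd] := series_cvg (a0 l) (a1 l) (DC y ^~ sy).
  have g0 : 0 <= g l y.
    apply: limr_ge => //; near=> n; by case/andP: (bd n).
  rewrite ger0_norm //; apply: limr_le => //; near=> n; by case/andP: (bd n).
have densE l y : simplex y ->
    dmbpp_density v (eta ^~ w) (theta ^~ w) K (xs l) y = (g l y)%:E.
  move=> sy; have [cv _] := series_cvg (a0 l) (a1 l) (DC y ^~ sy).
  exact: series_EFin.
have gm l B : measurable B -> B `<=` @simplex R m -> measurable_fun B (g l).
  move=> mB sB.
  apply: (measurable_realfun.measurable_fun_cvg (h := fun n y => \sum_(j < n) a l j * D j y)).
    move=> n; apply: (measurable_funS measurableT) => //.
    apply: measurable_sum => j; apply: measurable_realfun.measurable_funM.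
      exact: measurable_cst.
    exact: measurable_dir_k.
  by move=> y By; apply: gcv; apply: sB.
set F := fun l B => dmbpp_measure v (eta ^~ w) (theta ^~ w) K (xs l) B.
have key l (e : R) : 0 <= e -> (forall y, simplex y -> `|g l y - g 0%N y| <= C * e) ->
  forall B, measurable B -> B `<=` @simplex R m ->
  (`| F l B - F 0%N B | <= (C * e)%:E * mu S)%E.
  move=> e0 He B mB sB.
  have sBS : B `<=` S by apply: subset_trans sB simS.
  have muBS : (mu B <= mu S)%E.
    by apply: (@le_measure _ _ _ mu) => //; rewrite inE.
  have muB : (mu B < +oo)%E by apply: le_lt_trans muS.
  have int l' : mu.-integrable B (EFin \o g l').
    apply: measurable_bounded_integrable => //; first exact: gm.
    exists C; split; first exact: num_real.
    move=> M CM y By /=; exact: le_trans (gb l' y (sB y By)) (ltW CM).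
  rewrite /F /dmbpp_measure -Emu.
  rewrite (eq_integral (fun y => (g l y)%:E)); last first.
    by move=> y /[!inE] By; exact: densE (sB y By).
  rewrite [X in (_ - X)%E](eq_integral (fun y => (g 0%N y)%:E)); last first.
    by move=> y /[!inE] By; exact: densE (sB y By).
  rewrite -integralB_EFin //.
  apply: le_trans (le_abse_integral _ _ _) _ => //.
    apply: emeasurable_funB; apply/measurable_realfun.measurable_EFinP; exact: gm.
  apply: le_trans (integral_le_bound ((C * e)%:E) _ _ _ _) _ => //.
  - apply: emeasurable_funB; apply/measurable_realfun.measurable_EFinP; exact: gm.
  - by rewrite lee_fin mulr_ge0.
  - apply: aeW => y By; rewrite -EFinB abse_EFin lee_fin; exact: He (sB y By).
  by apply: lee_wpmul2l => //; rewrite lee_fin mulr_ge0.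
have tvb l e : 0 <= e -> (forall y, simplex y -> `|g l y - g 0%N y| <= C * e) ->
    (tv_dist (F l) (F 0%N) <= (C * e)%:E * mu S)%E.
  move=> e0 He; apply: ge_ereal_sup => _ [B [mB sB] <-]; exact: key.
have tv0 l : (0 <= tv_dist (F l) (F 0%N))%E.
  apply: ereal_sup_ubound; exists set0; first by split; [exact: measurable0 | exact: sub0set].
  by rewrite /F /dmbpp_measure -Emu !integral_set0 subee // abse0.
have he e : 0 < e -> \forall l \near \oo, forall y, simplex y -> `|g l y - g 0%N y| <= C * e.
  move=> e0; have := Sch e e0; apply: filterS => l Hl y sy.
  exact: (series_diff (a0 l) (a1 l) (a0 0%N) (a1 0%N) (DC y ^~ sy) Hl).
have muSfin : mu S \is a fin_num by rewrite ge0_fin_numE.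
set M := fine (mu S).
have M0 : 0 <= M by apply: fine_ge0.
have muSE : mu S = M%:E by rewrite fineK.
have tvle l e : 0 <= e -> (forall y, simplex y -> `|g l y - g 0%N y| <= C * e) ->
    0 <= fine (tv_dist (F l) (F 0%N)) <= C * e * M /\ tv_dist (F l) (F 0%N) \is a fin_num.
  move=> e0 He; have := tvb l e e0 He; have := tv0 l; rewrite muSE.
  by case: (tv_dist (F l) (F 0%N)) => [t| |] //=; rewrite !lee_fin => -> ->.
apply/fine_cvgP; split.
  near=> l; have [] := tvle l 1 ler01; last by [].
  by near: l; apply: he; exact: ltr01.
apply/cvgr0Pnorm_le => eps eps0.
have CM0 : 0 < C * M + 1 by rewrite ltr_pwDr // mulr_ge0.
set e := eps / (C * M + 1).
have e0 : 0 < e by rewrite divr_gt0.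
near=> l.
have Hl : forall y, simplex y -> `|g l y - g 0%N y| <= C * e.
  by near: l; apply: he.
have [/andP[t0 tle] _] := tvle l e (ltW e0) Hl.
rewrite /= ger0_norm //; apply: le_trans tle _.
have -> : C * e * M = eps * (C * M / (C * M + 1)).
  by rewrite /e; field; rewrite gt_eqF.
rewrite ler_piMr //; first exact: ltW.
by rewrite ler_pdivrMr // mul1r lerDl.
Unshelve. all: by end_near.
Qed.
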